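(* Let $n$ and $M$ be positive integers with $M$ dividing $n$, let $N=n/M$, and let $\lambda>0$. Let $\{X_{c,i}: 1\le c\le N,\ 1\le i\le M\}$ be i.i.d. exponential random variables with rate $\lambda$, and define $$\hat V_c=\sum_{i=1}^{M}X_{c,i},\qquad Y_{III}=\max_{1\le c\le N}\hat V_c .$$ Let $\bar{\bar U}_1,\dots,\bar{\bar U}_M$ be i.i.d. random variables, each distributed as the maximum $X_{N:N}$ of $N=n/M$ i.i.d. exponential random variables with rate $\lambda$, and set $\bar{\bar V}=\sum_{i=1}^M\bar{\bar U}_i$. Then $Y_{III}\le\bar{\bar V}$ in the usual stochastic order, i.e. $\Pr(Y_{III}>t)\le\Pr(\bar{\bar V}>t)$ for every real $t$.
   Context: Model: $n$ nodes in a fixed square area are divided into $N=n/M$ cells of $M$ nodes each. In Phase III of the transmission scheme, cells operate in parallel; within each cell, $M$ received packets are relayed one at a time to their intended recipients in the cell, each intra-cell transmission delay being i.i.d. exponential with rate $\lambda$. Thus $\hat V_c$ is the time for cell $c$ to finish Phase III and $Y_{III}$ (the duration of Phase III) is the time until the slowest cell finishes. For random variables $X_1,\dots,X_N$, $X_{k:N}$ denotes the $k$-th smallest. *)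

(* Defs.v *)
From HB Require Import structures.
From mathcomp Require Import all_boot all_order all_algebra.
From mathcomp Require Import all_classical all_reals all_analysis.
Set Implicit Arguments. Unset Strict Implicit. Unset Printing Implicit Defensive.
Import Order.TTheory GRing.Theory Num.Theory.
Local Open Scope classical_set_scope.
Local Open Scope ring_scope.

Definition mutually_independent {d} {T : measurableType d} {R : realType}
  (P : probability T R) (I : finType) (X : I -> T -> R) : Prop :=
  forall B : I -> set R, (forall i, measurable (B i)) ->
    P (\bigcap_(i in [set: I]) (X i @^-1` B i)) =
    (\prod_(i : I) P (X i @^-1` B i))%E.

Definition is_exponential {d} {T : measurableType d} {R : realType}
  (P : probability T R) (lambda : R) (X : T -> R) : Prop :=
  forall A : set R, measurable A -> P (X @^-1` A) = exponential_prob lambda A.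

(* Maximum of a finite family indexed by 'I_N (exact maximum when N > 0). *)
Definition maxf {R : realType} (N : nat) (f : 'I_N -> R) : R :=
  \big[Num.max/ head 0 [seq f i | i <- enum 'I_N]]_(i < N) f i.

(* Main.v *)
Require Import Defs.
From HB Require Import structures.
From mathcomp Require Import all_boot all_order all_algebra.
From mathcomp Require Import all_classical all_reals all_analysis.
Import Order.TTheory GRing.Theory Num.Theory.
Local Open Scope classical_set_scope.
Local Open Scope ring_scope.

Section PF.
Local Open Scope ereal_scope.
Context d d' (T1 : measurableType d) (T2 : measurableType d') (R : realType).
Variables (m : {measure set T1 -> \bar R}) (f : T1 -> T2).
Definition pf (mf : measurable_fun [set: T1] f) : set T2 -> \bar R :=
  fun A => m (f @^-1` A).
Variable mf : measurable_fun [set: T1] f.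
Let pf0 : pf mf set0 = 0.
Proof. by rewrite /pf preimage_set0 measure0. Qed.
Let pf_ge0 A : 0 <= pf mf A.
Proof. by apply: measure_ge0. Qed.
Let pf_sigma_additive : semi_sigma_additive (pf mf).
Proof.
move=> F mF tF mUF; rewrite /pf preimage_bigcup.
apply: measure_semi_sigma_additive.
- by move=> n; rewrite -[X in measurable X]setTI; exact: mf.
- apply/trivIsetP => /= i j _ _ ij; rewrite -preimage_setI.
  by move/trivIsetP : tF => /(_ _ _ _ _ ij) ->//; rewrite preimage_set0.
- by rewrite -preimage_bigcup -[X in measurable X]setTI; exact: mf.
Qed.
HB.instance Definition _ := isMeasure.Build _ _ _ (pf mf) pf0 pf_ge0 pf_sigma_additive.
End PF.
Arguments pf {d d' T1 T2 R} m {f} mf.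

Section maxf_lemmas.
Context {R : realType}.

Lemma maxf_ge N (f : 'I_N -> R) c : f c <= maxf f.
Proof.
rewrite /maxf; have : c \in index_enum 'I_N by rewrite mem_index_enum.
elim: (index_enum _) => [//|a r IH]; rewrite inE big_cons /= => /orP [/eqP <-|/IH h].
  by rewrite le_max lexx.
by rewrite le_max h orbT.
Qed.

Lemma maxf_eq N (f : 'I_N -> R) : (0 < N)%N -> exists c, maxf f = f c.
Proof.
move=> N0; rewrite /maxf.
apply: (big_ind (fun y => exists c, y = f c)).
- case E: (enum 'I_N) => [|i0 s] /=; last by exists i0.
  by move: (size_enum_ord N); rewrite E /= => N0'; rewrite -N0' in N0.
- move=> x y [c1 ->] [c2 ->]; rewrite /Num.max; case: ifP => _; by eexists.
- by move=> i _; exists i.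
Qed.

Lemma maxf_ltE N (f : 'I_N -> R) (q : \bar R) : (0 < N)%N ->
  ((maxf f)%:E < q)%E <-> (forall c, ((f c)%:E < q)%E).
Proof.
move=> N0; split.
  by move=> h c; apply: le_lt_trans h; rewrite lee_fin maxf_ge.
by move=> h; have [c ->] := maxf_eq _ f N0; exact: h.
Qed.

Lemma measurable_maxf d (T : measurableType d) N (g : 'I_N -> T -> R) :
  (forall c, measurable_fun setT (g c)) ->
  measurable_fun setT (fun w => maxf (fun c => g c w)).
Proof.
move=> mg; rewrite /maxf.
have mh : measurable_fun setT (fun w => head 0 [seq g i w | i <- enum 'I_N]).
  by case: (enum 'I_N) => [|i0 s] /=; [exact: measurable_cst|exact: mg].
elim: (index_enum _) => [|a r IH].
  by under eq_fun do rewrite big_nil.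
under eq_fun do rewrite big_cons /=.
exact: (measurable_realfun.measurable_maxr (mg a) IH).
Qed.
End maxf_lemmas.

Section orth.
Context {R : realType} (M : nat).
Definition orth (q : 'I_M -> \bar R) : set (M.-tuple R) :=
  [set x | forall i, ((tnth x i)%:E < q i)%E].
Definition Gorth : set (set (M.-tuple R)) := [set A | exists q, A = orth q].

Lemma measurable_ltE (y : \bar R) : measurable [set r : R | (r%:E < y)%E].
Proof.
case: y => [r| |].
- rewrite (_ : [set _ | _] = `]-oo, r[%classic); first exact: measurable_itv.
  by apply/seteqP; split => x /=; rewrite in_itv /= lte_fin.
- rewrite (_ : [set _ | _] = setT) //; apply/seteqP; split => x //= _; exact: ltry.
- rewrite (_ : [set _ | _] = set0) //; apply/seteqP; split => x //=.
Qed.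

Lemma measurable_orth q : measurable (orth q).
Proof.
rewrite (_ : orth q = \bigcap_(i in [set: 'I_M]) ((fun x : M.-tuple R => tnth x i) @^-1` [set r : R | (r%:E < q i)%E])).
  apply: fin_bigcap_measurable; first exact: finite_finset.
  move=> i _; rewrite -[X in measurable X]setTI.
  by apply: measurable_tnth => //; exact: measurable_ltE.
apply/seteqP; split => x /=; first by move=> h i _; exact: h.
by move=> h i; exact: h i I.
Qed.

Lemma orth_measurableE : @measurable _ (M.-tuple R) = <<s Gorth >>.
Proof.
apply/seteqP; split.
- apply: smallest_sub; first exact: smallest_sigma_algebra.
  rewrite -bigcup_seq => B [i _ [C mC <-]].
  have mR : @measurable _ R = <<s @measurable_realfun.RGenInftyO.G R >>.
    exact: (@measurable_realfun.RGenInftyO.measurableE R).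
  pose S := [set A : set R | <<s Gorth >> ((fun x : M.-tuple R => tnth x i) @^-1` A)].
  have [h0 hC hU] := @smallest_sigma_algebra _ [set: M.-tuple R] Gorth.
  have sS : sigma_algebra setT S.
    split.
    - by rewrite /S /= preimage_set0.
    - by move=> A sA; rewrite /S /= setTD preimage_setC -setTD; exact: hC.
    - by move=> F sF; rewrite /S /= preimage_bigcup; exact: hU.
  have GS : @measurable_realfun.RGenInftyO.G R `<=` S.
    move=> _ [r ->]; rewrite /S /=; apply: sub_sigma_algebra.
    exists (fun j => if j == i then r%:E else +oo%E).
    apply/seteqP; split => x /=.
      move=> xr j; case: eqP => [->|_]; last exact: ltry.
      by move: xr; rewrite /= in_itv /= lte_fin.
    move=> h; have := h i; rewrite eqxx lte_fin => xr.
    by rewrite /= in_itv /=.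
  have : <<s @measurable_realfun.RGenInftyO.G R >> C by rewrite -mR.
  by move/(smallest_sub sS GS); rewrite setTI.
- apply: smallest_sub; first exact: sigma_algebra_measurable.
  by move=> _ [q ->]; exact: measurable_orth.
Qed.

Lemma Gorth_setI : setI_closed Gorth.
Proof.
move=> _ _ [q1 ->] [q2 ->]; exists (fun i => Order.min (q1 i) (q2 i)).
apply/seteqP; split => x /=.
  by move=> [h1 h2] i; rewrite lt_min h1 h2.
by move=> h; split => i; have := h i; rewrite lt_min => /andP[].
Qed.

Lemma Gorth_setT : Gorth setT.
Proof.
exists (fun _ => +oo%E); apply/seteqP; split => x //= _ i; exact: ltry.
Qed.
End orth.

Theorem lemma2 (R : realType) (n M : nat) (lambda : R)
  (d : measure_display) (T : measurableType d) (P : probability T R)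
  (d' : measure_display) (T' : measurableType d') (P' : probability T' R)
  (X : 'I_(n %/ M) -> 'I_M -> {RV P >-> R})
  (U : 'I_M -> {RV P >-> R})
  (Z : 'I_(n %/ M) -> {RV P' >-> R}) :
  (0 < n)%N -> (0 < M)%N -> (M %| n)%N -> 0 < lambda ->
  (* the X_{c,i} are i.i.d. Exp(lambda) *)
  mutually_independent P (fun p : 'I_(n %/ M) * 'I_M => (X p.1 p.2 : T -> R)) ->
  (forall c i, is_exponential P lambda (X c i)) ->
  (* Z_1..Z_N are i.i.d. Exp(lambda) (on some probability space), so that
     maxf Z is distributed as X_{N:N} *)
  mutually_independent P' (fun c => (Z c : T' -> R)) ->
  (forall c, is_exponential P' lambda (Z c)) ->
  (* the U_i are i.i.d., each distributed as X_{N:N} *)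
  mutually_independent P (fun i => (U i : T -> R)) ->
  (forall i (A : set R), measurable A ->
     P ((U i : T -> R) @^-1` A) =
     P' ((fun w' => maxf (fun c => Z c w')) @^-1` A)) ->
  forall t : R,
    (P [set w | (t < maxf (fun c => \sum_(i < M) X c i w))%R] <=
    P [set w | (t < \sum_(i < M) U i w)%R])%E.
Proof.
move=> n0 M0 Mn lam0 indX expX indZ expZ indU lawU t.
have N0 : (0 < n %/ M)%N by rewrite divn_gt0 // dvdn_leq.
have mX c i : measurable_fun setT (X c i : T -> R) by exact: measurable_funP.
have mU i : measurable_fun setT (U i : T -> R) by exact: measurable_funP.
pose W (w : T) : M.-tuple R := [tuple maxf (fun c => X c i w) | i < M].
pose V (w : T) : M.-tuple R := [tuple U i w | i < M].
have mW : measurable_fun setT W.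
  apply/measurable_fun_tnthP => i.
  have -> : ((fun x : M.-tuple R => tnth x i) \o W) = (fun w => maxf (fun c => X c i w)).
    by apply/funext => w; rewrite /= tnth_mktuple.
  by apply: measurable_maxf => c; exact: mX.
have mV : measurable_fun setT V.
  apply/measurable_fun_tnthP => i.
  have -> : ((fun x : M.-tuple R => tnth x i) \o V) = (fun w => U i w).
    by apply/funext => w; rewrite /= tnth_mktuple.
  exact: mU.
pose B (q : 'I_M -> \bar R) i := [set r : R | (r%:E < q i)%E].
have mB q i : measurable (B q i) by exact: measurable_ltE.
have m1m2 : forall A, @Gorth R M A -> pf P mW A = pf P mV A.
  move=> _ [q ->]; rewrite /pf.
  transitivity (\prod_(i < M) \prod_(c < n %/ M) exponential_prob lambda (B q i))%E.
    have -> : W @^-1` @orth R M q =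
        \bigcap_(p in [set: 'I_(n %/ M) * 'I_M]) ((X p.1 p.2 : T -> R) @^-1` B q p.2).
      apply/seteqP; split => w /=.
        move=> h [c i] _ /=; have := h i; rewrite tnth_mktuple.
        by move/(maxf_ltE _ _ _ N0); apply.
      move=> h i; rewrite tnth_mktuple; apply/(maxf_ltE _ _ _ N0) => c.
      exact: (h (c, i) I).
    move: (indX (fun p => B q p.2) (fun p => mB q p.2)) => /= ->.
    under eq_bigr => p _ do rewrite (expX p.1 p.2 _ (mB q p.2)).
    by rewrite -(pair_bigA _ (fun c i => exponential_prob lambda (B q i))) exchange_big.
  have -> : V @^-1` @orth R M q = \bigcap_(i in [set: 'I_M]) ((U i : T -> R) @^-1` B q i).
    apply/seteqP; split => w /=.
      by move=> h i _; have := h i; rewrite tnth_mktuple.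
    by move=> h i; rewrite tnth_mktuple; exact: (h i I).
  move: (indU (B q) (mB q)) => /= ->.
  apply: eq_bigr => i _; rewrite (lawU i _ (mB q i)).
  have -> : (fun w' => maxf (fun c => Z c w')) @^-1` B q i =
      \bigcap_(c in [set: 'I_(n %/ M)]) ((Z c : T' -> R) @^-1` (fun _ => B q i) c).
    apply/seteqP; split => w /=.
      by move=> h c _; move: h; move/(maxf_ltE _ _ _ N0); apply.
    by move=> h; apply/(maxf_ltE _ _ _ N0) => c; exact: (h c I).
  move: (indZ (fun _ => B q i) (fun _ => mB q i)) => /= ->.
  by apply: eq_bigr => c _; rewrite (expZ c _ (mB q i)).
have fin : forall k : nat, (pf P mW ((fun _ => [set: M.-tuple R]) k) < +oo)%E.
  move=> k; rewrite /pf /= preimage_setT; exact: (le_lt_trans (probability_le1 P measurableT) (ltry _)).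
have cover : \bigcup_(k in [set: nat]) (fun _ => [set: M.-tuple R]) k = setT.
  by apply/seteqP; split => x // _; exists 0%N.
have key A : measurable A -> P (W @^-1` A) = P (V @^-1` A).
  move=> mA.
  exact: (measure_unique (@Gorth R M) (fun _ => setT) (@orth_measurableE R M)
    (@Gorth_setI R M) (fun _ => @Gorth_setT R M) cover (pf P mW) (pf P mV) m1m2 fin A mA).
pose S : set (M.-tuple R) := [set x | t < \sum_(i < M) tnth x i].
have mS : measurable S.
  have mf : measurable_fun setT (fun x : M.-tuple R => \sum_(i < M) tnth x i).
    by apply: measurable_sum => i; exact: measurable_tnth.
  rewrite (_ : S = setT `&` (fun x : M.-tuple R => \sum_(i < M) tnth x i) @^-1` `]t, +oo[%classic).
    by apply: (mf) => //; exact: measurable_itv.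
  apply/seteqP; split => x /=.
    by move=> h; split => //; rewrite in_itv /= andbT.
  by move=> [_]; rewrite in_itv /= andbT.
have mh : measurable_fun setT (fun w => maxf (fun c => \sum_(i < M) X c i w)).
  by apply: measurable_maxf => c; apply: measurable_sum => i; exact: mX.
have h1 : (P [set w | (t < maxf (fun c => \sum_(i < M) X c i w))%R] <= P (W @^-1` S))%E.
  apply: le_measure; rewrite ?inE.
  - rewrite (_ : [set w | _] = setT `&` (fun w => maxf (fun c => \sum_(i < M) X c i w)) @^-1` `]t, +oo[%classic).
      by apply: (mh) => //; exact: measurable_itv.
    apply/seteqP; split => x /=.
      by move=> h; split => //; rewrite in_itv /= andbT.
    by move=> [_]; rewrite in_itv /= andbT.
  - by rewrite -[X in measurable X]setTI; apply: (mW) => //.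
  - move=> w /= h; rewrite /S /=.
    under eq_bigr do rewrite tnth_mktuple.
    have [c hc] := maxf_eq _ (fun c => \sum_(i < M) X c i w) N0.
    rewrite hc in h; apply: lt_le_trans h _.
    by apply: ler_sum => i _; exact: maxf_ge.
apply: (le_trans h1); rewrite key //; apply: le_measure; rewrite ?inE.
- by rewrite -[X in measurable X]setTI; apply: (mV) => //.
- rewrite (_ : [set w | _] = setT `&` (fun w => \sum_(i < M) U i w) @^-1` `]t, +oo[%classic).
    have mg : measurable_fun setT (fun w => \sum_(i < M) U i w).
      by apply: measurable_sum => i; exact: mU.
    by apply: (mg) => //; exact: measurable_itv.
  apply/seteqP; split => x /=.
      by move=> h; split => //; rewrite in_itv /= andbT.
    by move=> [_]; rewrite in_itv /= andbT.
- move=> w; rewrite /S /=.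
  by under eq_bigr do rewrite tnth_mktuple.
Qed.
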